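(* Assume the Lipschitz gradient assumption, $r_1>L_x$, $r_2>L_y$, and let $\{(x^t,y^t,z^t,v^t)\}$ be generated by DS-GDA. Then for every $t\ge0$, $$q(z^t)\ge q(z^{t+1})+\frac{r_1}{2}\langle z^t+z^{t+1}-2x(z^t,v(z^{t+1})),z^t-z^{t+1}\rangle.$$
   Context: Let $\mathcal X\subset\mathbb R^n$, $\mathcal Y\subset\mathbb R^d$ be nonempty convex compact sets and $f:\mathbb R^n\times\mathbb R^d\to\mathbb R$ continuously differentiable. Lipschitz gradient assumption: there are $L_x,L_y>0$ such that for all $x,x'\in\mathcal X$, $y,y'\in\mathcal Y$, $\|\nabla_x f(x,y)-\nabla_x f(x',y')\|\le L_x(\|x-x'\|+\|y-y'\|)$ and $\|\nabla_y f(x,y)-\nabla_y f(x',y')\|\le L_y(\|x-x'\|+\|y-y'\|)$. $F(x,y,z,v)=f(x,y)+\frac{r_1}{2}\|x-z\|^2-\frac{r_2}{2}\|y-v\|^2$; $h(x,z,v)=\max_{y\in\mathcal Y}F(x,y,z,v)$; $p(z,v)=\min_{x\in\mathcal X}h(x,z,v)$; $x(z,v)=\arg\min_{x\in\mathcal X}h(x,z,v)$; $q(z)=\max_{v\in\mathbb R^d}p(z,v)$ with $v(z)$ a maximizer (assumed to exist). DS-GDA: given $x^0,y^0,z^0,v^0$, stepsizes $c,\alpha>0$, $\beta,\mu\in(0,1)$, for $t\ge0$: $x^{t+1}=\mathrm{proj}_{\mathcal X}(x^t-c\nabla_xF(x^t,y^t,z^t,v^t))$; $y^{t+1}=\mathrm{proj}_{\mathcal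 Y}(y^t+\alpha\nabla_yF(x^{t+1},y^t,z^t,v^t))$; $z^{t+1}=z^t+\beta(x^{t+1}-z^t)$; $v^{t+1}=v^t+\mu(y^{t+1}-v^t)$. *)

(* Defs.v *)
From HB Require Import structures.
From mathcomp Require Import all_boot all_order all_algebra.
From mathcomp Require Import all_classical all_reals all_analysis.
Set Implicit Arguments. Unset Strict Implicit. Unset Printing Implicit Defensive.
Import Order.TTheory GRing.Theory Num.Theory.
Import numFieldNormedType.Exports.
Local Open Scope classical_set_scope.
Local Open Scope ring_scope.

(* Vectors of R^n are row vectors 'rV[R]_n; Euclidean structure defined explicitly
   (the library norm on matrices is the max norm). *)
Section Defs.
Variable R : realType.

Definition dotv (k : nat) (u w : 'rV[R]_k) : R := \sum_(i < k) u 0 i * w 0 i.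
Definition sqnorm (k : nat) (u : 'rV[R]_k) : R := dotv u u.
Definition enorm (k : nat) (u : 'rV[R]_k) : R := Num.sqrt (sqnorm u).

Definition convex_setR (k : nat) (A : set 'rV[R]_k) : Prop :=
  forall a b (l : R), A a -> A b -> 0 <= l -> l <= 1 -> A (l *: a + (1 - l) *: b).

Definition gradx (n d : nat) (g : 'rV[R]_n -> 'rV[R]_d -> R) (x : 'rV[R]_n) (y : 'rV[R]_d)
  : 'rV[R]_n := \row_(i < n) 'D_(delta_mx 0 i) (fun x' => g x' y) x.
Definition grady (n d : nat) (g : 'rV[R]_n -> 'rV[R]_d -> R) (x : 'rV[R]_n) (y : 'rV[R]_d)
  : 'rV[R]_d := \row_(j < d) 'D_(delta_mx 0 j) (fun y' => g x y') y.

Definition C1 (n d : nat) (g : 'rV[R]_n -> 'rV[R]_d -> R) : Prop :=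
  let G := fun p : 'rV[R]_n * 'rV[R]_d => g p.1 p.2 in
  (forall p, differentiable G p) /\ (forall w, continuous (fun p => 'D_w G p)).

Definition is_proj (k : nat) (A : set 'rV[R]_k) (w pr : 'rV[R]_k) : Prop :=
  A pr /\ forall a, A a -> enorm (pr - w) <= enorm (a - w).

Variables (n d : nat) (f : 'rV[R]_n -> 'rV[R]_d -> R) (r1 r2 : R)
  (X : set 'rV[R]_n) (Y : set 'rV[R]_d).

Definition FF (x : 'rV[R]_n) (y : 'rV[R]_d) (z : 'rV[R]_n) (v : 'rV[R]_d) : R :=
  f x y + r1 / 2 * sqnorm (x - z) - r2 / 2 * sqnorm (y - v).

Definition hh (x : 'rV[R]_n) (z : 'rV[R]_n) (v : 'rV[R]_d) : R :=
  sup [set FF x y z v | y in Y].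

Definition pp (z : 'rV[R]_n) (v : 'rV[R]_d) : R :=
  inf [set hh x z v | x in X].

Definition qq (z : 'rV[R]_n) : R := sup (range (pp z)).

End Defs.

(* Main.v *)
Require Import Defs.
From HB Require Import structures.
From mathcomp Require Import all_boot all_order all_algebra.
From mathcomp Require Import all_classical all_reals all_analysis.
From mathcomp Require Import ring lra.
Import Order.TTheory GRing.Theory Num.Theory.
Import numFieldNormedType.Exports.
Local Open Scope classical_set_scope.
Local Open Scope ring_scope.
Lemma fy_ub (R : realType) n d (f : 'rV[R]_n -> 'rV[R]_d -> R) (Y : set 'rV[R]_d) x :
  C1 f -> compact Y -> exists M, forall y, Y y -> f x y <= M.
Proof.
move=> [Hd _] cY.
have hc : continuous (fun y => f x y).
  move=> y.
  have H := differentiable_continuous (Hd (x, y)).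
  exact: (@continuous2_cvg _ _ _ _ (nbhs y) _ (fun _ => x) id (fun a b => f a b) x y H (cvg_cst x) cvg_id).
have := compact_bounded (continuous_compact (continuous_subspaceT hc) cY).
move=> [M [_ HM]].
exists (M + 1) => y Yy.
apply: le_trans (ler_norm _) _.
apply: (HM (M+1)); first by rewrite ltrDl.
by exists y.
Qed.

Lemma sqnorm_ge0 (R : realType) k (u : 'rV[R]_k) : 0 <= sqnorm u.
Proof. by rewrite /sqnorm /dotv; apply: sumr_ge0 => i _; rewrite -expr2 sqr_ge0. Qed.

Lemma sqnorm_diff (R : realType) k (x a b : 'rV[R]_k) :
  sqnorm (x - a) - sqnorm (x - b) = dotv (a + b - 2%:R *: x) (a - b).
Proof.
rewrite /sqnorm /dotv -sumrB; apply: eq_bigr => i _; rewrite !mxE; ring.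
Qed.

Lemma hh_shift (R : realType) n d (f : 'rV[R]_n -> 'rV[R]_d -> R) (r1 r2 : R)
  (Y : set 'rV[R]_d) x z z' v :
  C1 f -> compact Y -> Y !=set0 -> 0 <= r2 ->
  hh f r1 r2 Y x z v = hh f r1 r2 Y x z' v + r1 / 2 * (sqnorm (x - z) - sqnorm (x - z')).
Proof.
move=> C cY [y0 Yy0] r2ge0.
have [M HM] := @fy_ub R n d f Y x C cY.
set c := r1 / 2 * (sqnorm (x - z) - sqnorm (x - z')).
have hs : has_sup [set FF f r1 r2 x y z' v | y in Y].
  split; first by exists (FF f r1 r2 x y0 z' v); exists y0.
  exists (M + r1 / 2 * sqnorm (x - z')) => _ [y Yy <-].
  have h1 := HM y Yy.
  have h2 : 0 <= r2 / 2 * sqnorm (y - v).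
    by apply: mulr_ge0; [rewrite divr_ge0 | exact: sqnorm_ge0].
  rewrite /FF; lra.
have hc : has_sup [set c].
  by split; [exists c | exists c => _ ->].
rewrite /hh -[c in RHS]sup1 -sup_sumE //; congr sup.
apply/seteqP; split => w.
  move=> [y Yy <-]; exists (FF f r1 r2 x y z' v); first by exists y.
  by exists c => //; rewrite /FF /c; ring.
move=> [_ [y Yy <-] [_ -> <-]]; exists y => //; rewrite /FF /c; ring.
Qed.
Theorem lemma7 (R : realType) (n d : nat)
  (X : set 'rV[R]_n) (Y : set 'rV[R]_d) (f : 'rV[R]_n -> 'rV[R]_d -> R)
  (Lx Ly r1 r2 c alpha beta mu : R)
  (xf : 'rV[R]_n -> 'rV[R]_d -> 'rV[R]_n) (vf : 'rV[R]_n -> 'rV[R]_d)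
  (xs : nat -> 'rV[R]_n) (ys : nat -> 'rV[R]_d)
  (zs : nat -> 'rV[R]_n) (vs : nat -> 'rV[R]_d) :
  (* X, Y nonempty convex compact *)
  X !=set0 -> convex_setR X -> compact X ->
  Y !=set0 -> convex_setR Y -> compact Y ->
  (* f continuously differentiable *)
  C1 f ->
  (* Lipschitz gradient assumption *)
  0 < Lx -> 0 < Ly ->
  (forall x x' y y', X x -> X x' -> Y y -> Y y' ->
     enorm (gradx f x y - gradx f x' y') <= Lx * (enorm (x - x') + enorm (y - y'))) ->
  (forall x x' y y', X x -> X x' -> Y y -> Y y' ->
     enorm (grady f x y - grady f x' y') <= Ly * (enorm (x - x') + enorm (y - y'))) ->
  Lx < r1 -> Ly < r2 ->
  (* x(z,v) = argmin_{x in X} h(x,z,v) *)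
  (forall z v, X (xf z v) /\
     forall x, X x -> hh f r1 r2 Y (xf z v) z v <= hh f r1 r2 Y x z v) ->
  (* v(z) is a maximizer of p(z, .) *)
  (forall z v, pp f r1 r2 X Y z v <= pp f r1 r2 X Y z (vf z)) ->
  (* DS-GDA stepsizes *)
  0 < c -> 0 < alpha -> 0 < beta < 1 -> 0 < mu < 1 ->
  (* DS-GDA iterations *)
  (forall t, is_proj X
     (xs t - c *: gradx (fun x y => FF f r1 r2 x y (zs t) (vs t)) (xs t) (ys t))
     (xs t.+1)) ->
  (forall t, is_proj Y
     (ys t + alpha *: grady (fun x y => FF f r1 r2 x y (zs t) (vs t)) (xs t.+1) (ys t))
     (ys t.+1)) ->
  (forall t, zs t.+1 = zs t + beta *: (xs t.+1 - zs t)) ->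
  (forall t, vs t.+1 = vs t + mu *: (ys t.+1 - vs t)) ->
  forall t : nat,
    qq f r1 r2 X Y (zs t) >=
    qq f r1 r2 X Y (zs t.+1)
    + r1 / 2 * dotv (zs t + zs t.+1 - 2%:R *: xf (zs t) (vf (zs t.+1))) (zs t - zs t.+1).
Proof.
move=> X0 _ _ Y0 _ cY C _ Ly0 _ _ _ Lyr2 Hxf Hvf _ _ _ _ _ _ _ _ t.
have r2ge0 : 0 <= r2 by apply: ltW; apply: lt_trans Ly0 Lyr2.
set z0 := zs t; set z1 := zs t.+1.
set v' := vf z1; set xs' := xf z0 v'.
have [Xx Hx] := Hxf z0 v'.
have [Xx1 Hx1] := Hxf z1 v'.
have q1 : qq f r1 r2 X Y z1 <= pp f r1 r2 X Y z1 v'.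
  apply: ge_sup; first by exists (pp f r1 r2 X Y z1 v'); exists v'.
  by move=> _ [w _ <-]; exact: Hvf.
have q0 : pp f r1 r2 X Y z0 v' <= qq f r1 r2 X Y z0.
  apply: ub_le_sup; last by exists v'.
  by exists (pp f r1 r2 X Y z0 (vf z0)) => _ [w _ <-]; exact: Hvf.
have p0 : hh f r1 r2 Y xs' z0 v' <= pp f r1 r2 X Y z0 v'.
  apply: lb_le_inf; first by exists (hh f r1 r2 Y xs' z0 v'); exists xs'.
  by move=> _ [w Xw <-]; exact: Hx.
have p1 : pp f r1 r2 X Y z1 v' <= hh f r1 r2 Y xs' z1 v'.
  apply: ge_inf; last by exists xs'.
  by exists (hh f r1 r2 Y (xf z1 v') z1 v') => _ [w Xw <-]; exact: Hx1.
have e := @hh_shift R n d f r1 r2 Y xs' z0 z1 v' C cY Y0 r2ge0.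
rewrite sqnorm_diff in e.
rewrite -/xs'.
lra.
Qed.
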